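(* $B_4(n,d,w)$ equals the supremum of $\sum_{v\in F}x(\{v\})$ over all $x:\mathcal{C}_4\to\mathbb{R}$ with $x(\emptyset)=1$, $x(S)=0$ whenever $d_{\min}(S)<d$, $M_{3,D}(x)$ positive semidefinite for every $D\in\mathcal{C}_3$ with $|D|\le 1$, and $M_{4,D}(x)$ positive semidefinite for every $D\in\mathcal{C}_4$ with $|D|\in\{2,4\}$. Moreover, in both this program and the programs defining $A_4(n,d,w)$ and $B_4(n,d,w)$, every feasible $x$ satisfies $x(S)\ge 0$ for all $S\in\mathcal{C}_4$.
   Context: Notation: for a code $S\subseteq\{0,1\}^n$, $d_{\min}(S)$ is the minimum Hamming distance between distinct words of $S$ ($+\infty$ if $|S|\le 1$). Let $F\subseteq\{0,1\}^n$ be the set of words of weight $w$. $\mathcal{C}_k$ is the set of codes $C\subseteq F$ with $|C|\le k$. For $j\le k$ and $D\in\mathcal{C}_j$, $\mathcal{C}_j(D):=\{C\in\mathcal{C}_j : C\supseteq D,\ |D|+2|C\setminus D|\le j\}$. For $x:\mathcal{C}_k\to\mathbb{R}$, $M_{j,D}(x)$ is the $\mathcal{C}_j(D)\times\mathcal{C}_j(D)$ matrix with entries $x(C\cup C')$. $A_4(n,d,w)$ is the supremum of $\sum_{v\in F}x(\{v\})$ over all $x:\mathcal{C}_4\to\mathbb{R}$ with $x(\emptyset)=1$, $x(S)=0$ whenever $d_{\min}(S)<d$, and $M_{4,D}(x)$ positive semidefinite for every $D\in\mathcal{C}_4$. $B_4(n,d,w)$ is the supremum of $\sum_{v\in F}x(\{v\})$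 over all $x:\mathcal{C}_4\to\mathbb{R}$ with $x(\emptyset)=1$, $x(S)=0$ whenever $d_{\min}(S)<d$, $M_{3,D}(x)$ positive semidefinite for every $D\in\mathcal{C}_3$ with $|D|<2$, and $M_{4,D}(x)$ positive semidefinite for every $D\in\mathcal{C}_4$ with $|D|\ge 2$. *)

(* Defs.v *)
From HB Require Import structures.
From mathcomp Require Import all_boot all_order all_algebra.
Unset Implicit Arguments. Unset Printing Implicit Defensive.
Import Order.TTheory GRing.Theory Num.Theory.
Local Open Scope ring_scope.

(* A word of {0,1}^n is represented by its support, a subset of 'I_n.
   Hamming distance = size of the symmetric difference of supports;
   the weight of a word = size of its support. *)
Definition word (n : nat) := {set 'I_n}.
Definition code (n : nat) := {set word n}.

Definition hamming (n : nat) (u v : word n) : nat := #|(u :\: v) :|: (v :\: u)|.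

(* d_min(S) < d, with the convention d_min(S) = +infinity when |S| <= 1:
   there exist two distinct words of S at Hamming distance < d. *)
Definition dmin_lt (n : nat) (S : code n) (d : nat) : bool :=
  [exists u in S, exists v in S, (u != v) && (hamming n u v < d)%N].

Definition Fw (n w : nat) : code n := [set v : word n | #|v| == w].

Definition Ck (n w k : nat) : {set code n} :=
  [set C : code n | (C \subset Fw n w) && (#|C| <= k)%N].

Definition CjD (n w j : nat) (D : code n) : {set code n} :=
  [set C in Ck n w j | (D \subset C) && (#|D| + 2 * #|C :\: D| <= j)%N].

Definition Mjd (R : realFieldType) (n w j : nat) (D : code n) (x : code n -> R)
  : 'M[R]_#|CjD n w j D| :=
  \matrix_(i, k) x (enum_val i :|: enum_val k).

(* positive semidefinite (for the symmetric matrices considered here) *)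
Definition psd (R : realFieldType) (m : nat) (M : 'M[R]_m) : Prop :=
  forall v : 'cV[R]_m, 0 <= ((v^T *m M *m v) 0 0).

Definition objective (R : realFieldType) (n w : nat) (x : code n -> R) : R :=
  \sum_(v in Fw n w) x [set v].

Definition base_feasible (R : realFieldType) (n d w : nat) (x : code n -> R) : Prop :=
  x set0 = 1 /\ (forall S : code n, S \in Ck n w 4 -> dmin_lt n S d -> x S = 0).

Definition feasA (R : realFieldType) (n d w : nat) (x : code n -> R) : Prop :=
  base_feasible R n d w x /\
  (forall D : code n, D \in Ck n w 4 -> psd R _ (Mjd R n w 4 D x)).

Definition feasB (R : realFieldType) (n d w : nat) (x : code n -> R) : Prop :=
  base_feasible R n d w x /\
  (forall D : code n, D \in Ck n w 3 -> (#|D| < 2)%N -> psd R _ (Mjd R n w 3 D x)) /\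
  (forall D : code n, D \in Ck n w 4 -> (2 <= #|D|)%N -> psd R _ (Mjd R n w 4 D x)).

Definition feasB' (R : realFieldType) (n d w : nat) (x : code n -> R) : Prop :=
  base_feasible R n d w x /\
  (forall D : code n, D \in Ck n w 3 -> (#|D| <= 1)%N -> psd R _ (Mjd R n w 3 D x)) /\
  (forall D : code n, D \in Ck n w 4 -> (#|D| == 2)%N || (#|D| == 4)%N ->
     psd R _ (Mjd R n w 4 D x)).

(* Two maximization programs have the same supremum (in the extended reals)
   iff their objective values have exactly the same upper bounds. *)
Definition same_sup {R : realFieldType} {T : Type} (P Q : T -> Prop) (f : T -> R) : Prop :=
  forall b : R, (forall x, P x -> f x <= b) <-> (forall x, Q x -> f x <= b).

(* Main.v *)
Require Import Defs.
From HB Require Import structures.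
From mathcomp Require Import all_boot all_order all_algebra.
Import Order.TTheory GRing.Theory Num.Theory.
Local Open Scope ring_scope.

Lemma psd_diag (R : realFieldType) m (M : 'M[R]_m) i : psd R m M -> 0 <= M i i.
Proof.
move=> H; have := H (delta_mx i 0).
by rewrite trmx_delta -rowE -colE !mxE.
Qed.

Lemma psd_const (R : realFieldType) m (M : 'M[R]_m) c :
  0 <= c -> (forall i j, M i j = c) -> psd R m M.
Proof.
move=> c0 HM v.
have -> : (v^T *m M *m v) 0 0 = c * (\sum_j v j 0) ^+ 2.
  rewrite mxE expr2 mulrA mulr_sumr; apply: eq_bigr => k _.
  rewrite mxE mulr_sumr; congr (_ * _).
  by apply: eq_bigr => j _; rewrite !mxE HM mulrC.
by rewrite mulr_ge0 // sqr_ge0.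
Qed.

Lemma Mjd_diag (R : realFieldType) n w j D (x : code n -> R) C :
  C \in CjD n w j D -> psd R _ (Mjd R n w j D x) -> 0 <= x C.
Proof.
move=> HC H; have := @psd_diag R _ _ (enum_rank_in HC C) H.
by rewrite mxE enum_rankK_in // setUid.
Qed.

Lemma nonneg_gen (R : realFieldType) (n w : nat) (x : code n -> R) :
  x set0 = 1 ->
  (forall S, S \in Ck n w 4 -> #|S| = 1%N -> 0 <= x S) ->
  (forall D, D \in Ck n w 4 -> (#|D| == 2)%N || (#|D| == 4)%N -> psd R _ (Mjd R n w 4 D x)) ->
  forall S, S \in Ck n w 4 -> 0 <= x S.
Proof.
move=> H0 H1 H4 S HS.
have HS' := HS; rewrite inE in HS'; case/andP: HS' => SF Sle.
have HC : forall D : code n, D \subset S -> (#|D| + 2 * #|S :\: D| <= 4)%N -> S \in CjD n w 4 D.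
  by move=> D DS Hc; rewrite inE HS DS Hc.
have CkD : forall D : code n, D \subset S -> D \in Ck n w 4.
  move=> D DS; rewrite inE (subset_trans DS SF) /=.
  by apply: leq_trans (subset_leq_card DS) Sle.
case E: #|S| Sle => [|[|[|[|[|k]]]]] // _.
- by move/eqP: E; rewrite cards_eq0 => /eqP ->; rewrite H0 ler01.
- exact: H1.
- apply: (@Mjd_diag R n w 4 S x S); first by apply: HC; rewrite ?subxx // setDv cards0 E.
  by apply: H4 => //; rewrite E.
- have [a aS] : exists a, a \in S.
    by apply/set0Pn; rewrite -card_gt0 E.
  have DS : S :\ a \subset S by apply: subD1set.
  have Dc : #|S :\ a| = 2%N by move: E; rewrite (cardsD1 a) aS => [[]].
  apply: (@Mjd_diag R n w 4 (S :\ a) x S).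
    by apply: HC => //; rewrite Dc cardsDS // E Dc.
  by apply: H4; [apply: CkD | rewrite Dc].
- apply: (@Mjd_diag R n w 4 S x S); first by apply: HC; rewrite ?subxx // setDv cards0 E.
  by apply: H4 => //; rewrite E.
Qed.

Lemma single_in (n w j : nat) (S : code n) :
  S \in Ck n w 4 -> #|S| = 1%N -> (1 <= j)%N -> (j <= 4)%N ->
  S \in Ck n w j /\ S \in CjD n w j S.
Proof.
move=> HS E j1 j4; rewrite inE in HS; case/andP: HS => SF _.
have H : S \in Ck n w j by rewrite inE SF E.
by split => //; rewrite inE H subxx setDv cards0 E addn0.
Qed.

Lemma feasB'_nonneg (R : realFieldType) n d w x :
  feasB' R n d w x -> forall S, S \in Ck n w 4 -> 0 <= x S.
Proof.
move=> [[H0 _] [H3 H4]]; apply: nonneg_gen => // S HS E.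
have [A B] := @single_in n w 3 S HS E isT isT.
by apply: (@Mjd_diag R n w 3 S x S B); apply: H3 => //; rewrite E.
Qed.

Lemma feasB_feasB' (R : realFieldType) n d w x :
  feasB R n d w x <-> feasB' R n d w x.
Proof.
split.
- move=> [H0 [H3 H4]]; split => //; split.
    by move=> D HD HDc; apply: H3.
  by move=> D HD H; apply: H4 => //; case/orP: H => /eqP ->.
- move=> Hf; have Hn := @feasB'_nonneg R n d w x Hf.
  move: Hf => [H0 [H3 H4]]; split => //; split.
    by move=> D HD HDc; apply: H3.
  move=> D HD HDc.
  case E: #|D| HDc => [|[|[|[|[|k]]]]] // _; try by apply: H4; rewrite ?E.
  + (* |D| = 3: C_4(D) = {D} *)
    apply: (@psd_const R _ _ (x D)); first exact: Hn.
    move=> i j; rewrite mxE.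
    have Hall : forall C, C \in CjD n w 4 D -> C = D.
      move=> C; rewrite inE => /and3P[_ DC].
      rewrite E => Hc; apply/eqP; rewrite eq_sym eqEcard DC /=.
      have : #|C :\: D| = 0%N by move: Hc; case: #|C :\: D| => // [] [].
      by rewrite cardsDS // => /eqP; rewrite subn_eq0 E.
    by rewrite (Hall _ (enum_valP i)) (Hall _ (enum_valP j)) setUid.
  + rewrite inE in HD; case/andP: HD => _; rewrite E //.
Qed.

Lemma feasA_nonneg (R : realFieldType) n d w x :
  feasA R n d w x -> forall S, S \in Ck n w 4 -> 0 <= x S.
Proof.
move=> [[H0 _] H4]; apply: nonneg_gen => //.
  move=> S HS E; have [A B] := @single_in n w 4 S HS E isT isT.
  exact: (@Mjd_diag R n w 4 S x S B (H4 _ A)).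
by move=> D HD _; apply: H4.
Qed.

Theorem mainTheorem6 (R : realFieldType) (n d w : nat) :
  same_sup (feasB R n d w) (feasB' R n d w) (objective R n w) /\
  (forall x : code n -> R, feasA R n d w x \/ feasB R n d w x \/ feasB' R n d w x ->
     forall S : code n, S \in Ck n w 4 -> 0 <= x S).
Proof.
split.
  move=> b; split=> H x Hx; apply: H; by apply/feasB_feasB'.
move=> x [HA|[HB|HB']].
- exact: (@feasA_nonneg R n d w x HA).
- by apply: (@feasB'_nonneg R n d w x); apply/feasB_feasB'.
- exact: (@feasB'_nonneg R n d w x HB').
Qed.
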